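(* Let $n,m,q\ge 1$ and $\beta\in[0,1]$. Let $B_0\in\mathbb{R}^{n\times n}$ be symmetric positive definite and $U=B_0^{1/2}$ its symmetric positive definite square root. Let $X_f\in\mathbb{R}^{n\times m}$ and $P_f=X_fX_f^T$. Let $\hat H\in\mathbb{R}^{q\times n}$ be any real matrix, $\hat R\in\mathbb{R}^{q\times q}$ symmetric positive definite, and $K=\hat H^T\hat R^{-1}\hat H$. Let $U_h=\bigl[\sqrt{1-\beta}\,U\ \ \sqrt{\beta}\,X_f\bigr]\in\mathbb{R}^{n\times(n+m)}$ and $S_{P4D}=I_{n+m}+U_h^TKU_h$. Then \[ 1\le \kappa(S_{P4D})\le 1+\bigl[(1-\beta)\lambda_1(B_0)+\beta\lambda_1(P_f)\bigr]\lambda_1(K). \]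
   Context: For a symmetric matrix $A$ of size $k\times k$, $\lambda_j(A)$ denotes its $j$-th largest eigenvalue ($\lambda_1$ largest, $\lambda_k$ smallest); for symmetric positive definite $A$, $\kappa(A)=\lambda_1(A)/\lambda_k(A)$. In the application, $P_f$ is an ensemble covariance with $X_f$ the scaled ensemble perturbation matrix, and $S_{P4D}$ is the Hessian of hybrid 4D-Var preconditioned by the control variable transform $\delta\boldsymbol{x}=U_h\delta\boldsymbol{v}$. *)

(* Defs.v *)
From HB Require Import structures.
From mathcomp Require Import all_boot all_order all_algebra.
From mathcomp Require Import classical_sets reals.
Set Implicit Arguments. Unset Strict Implicit. Unset Printing Implicit Defensive.
Import Order.TTheory GRing.Theory Num.Theory.
Local Open Scope ring_scope.
Local Open Scope classical_set_scope.

Definition symmetric_mx (R : realType) (k : nat) (A : 'M[R]_k) : Prop := A^T = A.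

Definition spd_mx (R : realType) (k : nat) (A : 'M[R]_k) : Prop :=
  A^T = A /\ forall x : 'cV[R]_k, x != 0 -> 0 < (x^T *m A *m x) 0 0.

Definition spectrum (R : realType) (k : nat) (A : 'M[R]_k) : set R :=
  [set a | eigenvalue A a].

Definition lambda_max (R : realType) (k : nat) (A : 'M[R]_k) : R := sup (spectrum A).
Definition lambda_min (R : realType) (k : nat) (A : 'M[R]_k) : R := inf (spectrum A).

Definition cond_num (R : realType) (k : nat) (A : 'M[R]_k) : R :=
  lambda_max A / lambda_min A.

(* Main.v *)
Require Import Defs.
From HB Require Import structures.
From mathcomp Require Import all_boot all_order all_algebra.
From mathcomp Require Import classical_sets reals.
From mathcomp Require Import all_classical all_reals all_analysis.
From mathcomp Require Import ring lra.
Set Implicit Arguments. Unset Strict Implicit. Unset Printing Implicit Defensive.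
Import Order.TTheory GRing.Theory Num.Theory.
Import numFieldNormedType.Exports.
Local Open Scope ring_scope.
Local Open Scope classical_set_scope.

Section S.
Variable R : realType.

Definition qf k (A : 'M[R]_k) (x : 'rV[R]_k) : R := (x *m A *m x^T) 0 0.
Definition nrm2 k (x : 'rV[R]_k) : R := (x *m x^T) 0 0.

Lemma cont_sum (T : topologicalType) (I : Type) (s : seq I) (F : I -> T -> R) :
  (forall i, continuous (F i)) -> continuous (fun x => \sum_(i <- s) F i x).
Proof.
move=> Fc; elim: s => [|i s IH] x.
  under eq_fun do rewrite big_nil. exact: cst_continuous.
under eq_fun do rewrite big_cons.
exact: (continuousD (Fc i x) (IH x)).
Qed.

Lemma qfE k (A : 'M[R]_k) x : qf A x = \sum_j (\sum_i x 0 i * A i j) * x 0 j.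
Proof.
rewrite /qf !mxE; apply: eq_bigr => j _; rewrite !mxE; congr (_ * _).
Qed.

Lemma qf_cont k (A : 'M[R]_k) : continuous (qf A).
Proof.
have -> : qf A = (fun x => \sum_j (\sum_i x 0 i * A i j) * x 0 j).
  by apply: funext => x; rewrite qfE.
apply: cont_sum => j.
have h1 : continuous (fun x : 'rV[R]_k => \sum_i x 0 i * A i j).
  apply: cont_sum => i y; apply: continuousM; first exact: coord_continuous.
  exact: cst_continuous.
move=> x; apply: continuousM; first exact: h1.
exact: coord_continuous.
Qed.


Lemma nrm2E k (x : 'rV[R]_k) : nrm2 x = \sum_j x 0 j ^+ 2.
Proof. by rewrite /nrm2 mxE; apply: eq_bigr => j _; rewrite !mxE expr2. Qed.

Lemma nrm2_qf k (x : 'rV[R]_k) : nrm2 x = qf 1%:M x.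
Proof. by rewrite /qf mulmx1. Qed.

Lemma nrm2_ge0 k (x : 'rV[R]_k) : 0 <= nrm2 x.
Proof. by rewrite nrm2E; apply: sumr_ge0 => j _; rewrite sqr_ge0. Qed.

Lemma coord_le_nrm2 k (x : 'rV[R]_k) j : x 0 j ^+ 2 <= nrm2 x.
Proof.
rewrite nrm2E (bigD1 j) //= lerDl; apply: sumr_ge0 => i _; exact: sqr_ge0.
Qed.

Lemma rayleigh_max k (A : 'M[R]_k.+1) :
  exists2 c : 'rV[R]_k.+1, nrm2 c = 1 &
    forall y, nrm2 y = 1 -> qf A y <= qf A c.
Proof.
pose Sph := [set x : 'rV[R]_k.+1 | nrm2 x = 1].
have Sne : Sph !=set0.
  exists (delta_mx 0 0); rewrite /Sph /= /nrm2 trmx_delta mul_delta_mx.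
  by rewrite mxE !eqxx.
have Scl : closed Sph.
  have -> : Sph = (@nrm2 k.+1) @^-1` [set 1] by [].
  apply: preimage_closed; last exact: closed_eq.
  move=> x _; rewrite (_ : @nrm2 k.+1 = qf 1%:M); last by apply: funext => y; rewrite nrm2_qf.
  exact: qf_cont.
have Sbd : bounded_set Sph.
  exists 1; split => // M M1 x Sx.
  rewrite /Num.Def.normr /= mx_normrE; apply: bigmax_le => [|[i j] _]; first lra.
  rewrite /= ord1.
  have h := coord_le_nrm2 x j; rewrite Sx in h.
  have h2 := real_normK (num_real (x 0 j)).
  have h3 : 0 <= `|x 0 j| by [].
  nra.
have Scp : compact Sph by exact: bounded_closed_compact.
have [c cS cmax] := compact_EVT_max Sne Scp (continuous_subspaceT (@qf_cont _ A)).
exists c; first by move: cS; rewrite inE.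
by move=> y yS; apply: cmax; rewrite inE.
Qed.

Definition bf k (A : 'M[R]_k) (x y : 'rV[R]_k) : R := (x *m A *m y^T) 0 0.

Lemma bf_sym k (A : 'M[R]_k) x y : A^T = A -> bf A y x = bf A x y.
Proof.
move=> sA; rewrite /bf.
have -> : y *m A *m x^T = (x *m A *m y^T)^T by rewrite !trmx_mul trmxK sA mulmxA.
by rewrite mxE.
Qed.

Lemma qfD k (A : 'M[R]_k) x y t : A^T = A ->
  qf A (x + t *: y) = qf A x + 2 * t * bf A x y + t ^+ 2 * qf A y.
Proof.
move=> sA; rewrite /qf linearD /= linearZ /= !mulmxDl !mulmxDr.
rewrite -!scalemxAl -!scalemxAr.
have h := bf_sym x y sA; rewrite /bf in h *; move: h.
set a := x *m A *m x^T; set b := x *m A *m y^T; set c := y *m A *m x^T.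
set d := y *m A *m y^T.
rewrite !mxE => ->; ring.
Qed.

Lemma qfZ k (A : 'M[R]_k) x t : qf A (t *: x) = t ^+ 2 * qf A x.
Proof.
rewrite /qf linearZ /= -!scalemxAl -!scalemxAr !mxE; ring.
Qed.

Lemma nrm2Z k (x : 'rV[R]_k) t : nrm2 (t *: x) = t ^+ 2 * nrm2 x.
Proof. by rewrite !nrm2_qf qfZ. Qed.

Lemma nrm2_eq0 k (x : 'rV[R]_k) : nrm2 x = 0 -> x = 0.
Proof.
move=> h; apply/rowP => j; rewrite mxE.
have := coord_le_nrm2 x j; rewrite h => h1.
have h2 := sqr_ge0 (x 0 j).
have : x 0 j ^+ 2 = 0 by apply/eqP; rewrite eq_le h1 h2.
by move/eqP; rewrite sqrf_eq0 => /eqP.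
Qed.

Lemma nrm2_gt0 k (x : 'rV[R]_k) : x != 0 -> 0 < nrm2 x.
Proof.
move=> xn0; rewrite lt_def nrm2_ge0 andbT; apply/eqP => /nrm2_eq0 h.
by rewrite h eqxx in xn0.
Qed.

Lemma rayleigh_bound k (A : 'M[R]_k.+1) :
  exists2 c : 'rV[R]_k.+1, nrm2 c = 1 &
    forall y, qf A y <= qf A c * nrm2 y.
Proof.
have [c c1 cmax] := rayleigh_max A; exists c => // y.
have [y0|yn0] := eqVneq y 0.
  by rewrite y0 /qf /nrm2 !mul0mx !mxE mulr0.
have yp := nrm2_gt0 yn0.
pose t := (Num.sqrt (nrm2 y))^-1.
have st : Num.sqrt (nrm2 y) ^+ 2 = nrm2 y by rewrite sqr_sqrtr // ltW.
have sp : 0 < Num.sqrt (nrm2 y) by rewrite sqrtr_gt0.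
have t2 : t ^+ 2 * nrm2 y = 1.
  by rewrite /t exprVn st mulVf // gt_eqF.
have := cmax (t *: y); rewrite nrm2Z t2 qfZ => /(_ erefl) h.
have t2p : 0 < t ^+ 2 by rewrite exprn_gt0 // invr_gt0.
by have := ler_wpM2r (ltW yp) h; rewrite mulrAC t2 mul1r.
Qed.

Lemma quad_le0 (b d : R) : d <= 0 -> (forall t, 2 * t * b + t ^+ 2 * d <= 0) -> b = 0.
Proof.
move=> d0 h.
pose e := (1 - d)^-1.
have e0 : 0 < e by rewrite invr_gt0; lra.
have ed : e * (1 - d) = 1 by rewrite mulVf //; apply/eqP; lra.
have := h (b * e).
have hb : 0 <= b ^+ 2 by exact: sqr_ge0.
move=> h1.
have h2 : b ^+ 2 * (e * (1 + e)) <= 0.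
  have -> : b ^+ 2 * (e * (1 + e)) = 2 * (b * e) * b + (b * e) ^+ 2 * d.
    have : e * d = e - 1 by lra.
    move=> hed; rewrite !expr2; nra.
  exact: h1.
have : b ^+ 2 = 0.
  apply/eqP; rewrite eq_le hb andbT.
  have ep : 0 < e * (1 + e) by nra.
  nra.
by move/eqP; rewrite sqrf_eq0 => /eqP.
Qed.

Lemma max_eigen k (A : 'M[R]_k) (c : 'rV[R]_k) a : A^T = A ->
  (forall y, qf A y <= a * nrm2 y) -> qf A c = a * nrm2 c ->
  c *m A = a *: c.
Proof.
move=> sA hle hc.
pose B := A - a%:M.
have sB : B^T = B by rewrite /B linearB /= sA tr_scalar_mx.
have qB y : qf B y = qf A y - a * nrm2 y.
  rewrite /qf /nrm2 /B mulmxBr mulmxBl mul_mx_scalar -scalemxAl.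
  set P := y *m A *m y^T; set Q := y *m y^T; by rewrite !mxE.
have bc y : bf B c y = 0.
  apply: (@quad_le0 _ (qf B y)); first by rewrite qB subr_le0.
  move=> t; have := qfD c y t sB; rewrite [qf B c]qB hc subrr add0r => <-.
  by rewrite qB subr_le0.
have : nrm2 (c *m B) = 0.
  by have := bc (c *m B); rewrite /bf /nrm2.
move/nrm2_eq0; rewrite /B mulmxBr mul_mx_scalar => /eqP.
by rewrite subr_eq0 => /eqP.
Qed.

Lemma sym_max k (A : 'M[R]_k.+1) : A^T = A ->
  exists a, [/\ eigenvalue A a, forall y, qf A y <= a * nrm2 y &
     forall b, eigenvalue A b -> b <= a].
Proof.
move=> sA; have [c c1 cmax] := rayleigh_bound A.
exists (qf A c); split => //.
- apply/eigenvalueP; exists c.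
    by apply: max_eigen => //; rewrite c1 mulr1.
  by apply/eqP => c0; move: c1; rewrite c0 /nrm2 mul0mx mxE => /eqP; rewrite eq_sym oner_eq0.
- move=> b /eigenvalueP [v vA vn0].
  have vp := nrm2_gt0 vn0.
  have : qf A v = b * nrm2 v by rewrite /qf vA -scalemxAl mxE.
  move=> h; have := cmax v; rewrite h.
  by rewrite ler_pM2r.
Qed.


Lemma sym_lmax k (A : 'M[R]_k) : (0 < k)%N -> A^T = A ->
  [/\ eigenvalue A (lambda_max A), forall y, qf A y <= lambda_max A * nrm2 y &
     forall b, eigenvalue A b -> b <= lambda_max A].
Proof.
case: k A => // k A _ sA.
have [a [ea ha hb]] := sym_max sA.
suff -> : lambda_max A = a by [].
rewrite /lambda_max; apply/eqP; rewrite eq_le; apply/andP; split.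
  by apply: ge_sup; [exists a | move=> b /hb].
apply: sup_upper_bound => //; split; first by exists a.
by exists a => b /hb.
Qed.

Lemma lmax_ge0 k (A : 'M[R]_k) : (0 < k)%N -> A^T = A ->
  (forall y, 0 <= qf A y) -> 0 <= lambda_max A.
Proof.
case: k A => // k A _ sA hp.
have [_ h _] := sym_lmax (ltn0Sn k) sA.
have := h (delta_mx 0 0); have := hp (delta_mx 0 0).
rewrite /nrm2 trmx_delta mul_delta_mx mxE !eqxx /= mulr1.
exact: le_trans.
Qed.

Lemma spd_qf_ge0 k (A : 'M[R]_k) : spd_mx A -> forall z, 0 <= qf A z.
Proof.
move=> [_ hA] z; have [->|zn0] := eqVneq z 0.
  by rewrite /qf !mul0mx mxE.
have zt : z^T != 0.
  by apply: contraNneq zn0 => h; rewrite -(trmxK z) h trmx0.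
by have := hA _ zt; rewrite trmxK => /ltW.
Qed.

Lemma spd_unit k (A : 'M[R]_k) : spd_mx A -> A \in unitmx.
Proof.
move=> [_ hA]; rewrite unitmxE unitfE; apply/negP => /det0P [v vn0 vA].
have vt : v^T != 0.
  by apply: contraNneq vn0 => h; rewrite -(trmxK v) h trmx0.
by have := hA _ vt; rewrite trmxK vA mul0mx mxE ltxx.
Qed.

Lemma mxD00 p r (A B : 'M[R]_(p, r)) i j : (A + B) i j = A i j + B i j.
Proof. by rewrite mxE. Qed.
Lemma mxZ00 p r (a : R) (A : 'M[R]_(p, r)) i j : (a *: A) i j = a * A i j.
Proof. by rewrite mxE. Qed.

Lemma qf_eig k (A : 'M[R]_k) v a : v *m A = a *: v -> qf A v = a * nrm2 v.
Proof. by move=> h; rewrite /qf h -scalemxAl mxZ00. Qed.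

End S.

Theorem theorem6 (R : realType) (n m q : nat) (beta : R)
  (B0 U : 'M[R]_n.+1) (Xf : 'M[R]_(n.+1, m.+1))
  (Hhat : 'M[R]_(q.+1, n.+1)) (Rhat : 'M[R]_q.+1) :
  0 <= beta <= 1 ->
  spd_mx B0 ->
  spd_mx U -> U *m U = B0 ->
  spd_mx Rhat ->
  let Pf := Xf *m Xf^T in
  let K := Hhat^T *m invmx Rhat *m Hhat in
  let Uh := row_mx (Num.sqrt (1 - beta) *: U) (Num.sqrt beta *: Xf) in
  let S := 1%:M + Uh^T *m K *m Uh in
  1 <= cond_num S /\
  cond_num S <=
    1 + ((1 - beta) * lambda_max B0 + beta * lambda_max Pf) * lambda_max K.
Proof.
move=> /andP[b0 b1] sB0 sU UU sR Pf K Uh S.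
have Ru := spd_unit sR.
set Ri := invmx Rhat.
have sRi : Ri^T = Ri by rewrite /Ri trmx_inv sR.1.
have qRi w : 0 <= qf Ri w.
  have -> : qf Ri w = qf Rhat (w *m Ri).
    by rewrite /qf trmx_mul sRi !mulmxA -(mulmxA w Ri Rhat) /Ri mulVmx // mulmx1.
  exact: spd_qf_ge0.
have sK : K^T = K by rewrite /K !trmx_mul trmxK sRi mulmxA.
have qK w : 0 <= qf K w.
  have -> : qf K w = qf Ri (w *m Hhat^T).
    by rewrite /qf /K trmx_mul trmxK !mulmxA.
  exact: qRi.
clearbody K.
have sPf : Pf^T = Pf by rewrite /Pf trmx_mul trmxK.
have sB0s : B0^T = B0 := sB0.1.
have sUs : U^T = U := sU.1.
have sS : S^T = S.
  by rewrite /S linearD /= tr_scalar_mx !trmx_mul trmxK sK mulmxA.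
have qS v : qf S v = nrm2 v + qf K (v *m Uh^T).
  rewrite /qf /nrm2 /S mulmxDr mulmx1 mulmxDl mxD00; congr (_ + _).
  by rewrite trmx_mul trmxK !mulmxA.
have P_eq : Uh *m Uh^T = (1 - beta) *: B0 + beta *: Pf.
  rewrite /Uh tr_row_mx mul_row_col !linearZ /= -!scalemxAl.
  by rewrite !scalerA -!expr2 !sqr_sqrtr ?subr_ge0 // sUs UU.
pose G := Uh^T *m Uh.
have sG : G^T = G by rewrite /G trmx_mul trmxK.
have qG v : qf G v = nrm2 (v *m Uh^T).
  by rewrite /qf /nrm2 /G trmx_mul trmxK !mulmxA.
have pos : (0 < n.+1 + m.+1)%N by [].
have [eG hG _] := sym_lmax pos sG.
have [_ hB0 _] := sym_lmax (ltn0Sn n) sB0s.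
have [_ hPf _] := sym_lmax (ltn0Sn n) sPf.
have [_ hK _] := sym_lmax (ltn0Sn n) sK.
have B0ge0 : 0 <= lambda_max B0 := lmax_ge0 (ltn0Sn n) sB0s (spd_qf_ge0 sB0).
have qPf w : 0 <= qf Pf w.
  have -> : qf Pf w = nrm2 (w *m Xf) by rewrite /qf /nrm2 /Pf trmx_mul !mulmxA.
  exact: nrm2_ge0.
have Pfge0 : 0 <= lambda_max Pf := lmax_ge0 (ltn0Sn n) sPf qPf.
have Kge0 : 0 <= lambda_max K := lmax_ge0 (ltn0Sn n) sK qK.
set C := (1 - beta) * lambda_max B0 + beta * lambda_max Pf.
have b1' : 0 <= 1 - beta by rewrite subr_ge0.
have Cge0 : 0 <= C by rewrite /C addr_ge0 // mulr_ge0.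
have qP w : qf (Uh *m Uh^T) w <= C * nrm2 w.
  have -> : qf (Uh *m Uh^T) w = (1 - beta) * qf B0 w + beta * qf Pf w.
    by rewrite P_eq /qf mulmxDr mulmxDl -!scalemxAr -!scalemxAl mxD00 !mxZ00.
  have h1 := ler_wpM2l b1' (hB0 w).
  have h2 := ler_wpM2l b0 (hPf w).
  rewrite /C; lra.
have gC : lambda_max G <= C.
  move: eG => /eigenvalueP [z zG zn0].
  have zp := nrm2_gt0 zn0.
  have hz := qf_eig zG; rewrite qG in hz.
  have [w0|wn0] := eqVneq (z *m Uh^T) 0.
    move: hz; rewrite w0 /nrm2 mul0mx mxE => /esym /eqP.
    rewrite mulf_eq0 (gt_eqF zp) orbF => /eqP ->; exact: Cge0.
  have wP : (z *m Uh^T) *m (Uh *m Uh^T) = lambda_max G *: (z *m Uh^T).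
    by rewrite mulmxA -(mulmxA z) -/G zG scalemxAl.
  have := qP (z *m Uh^T); rewrite (qf_eig wP).
  by rewrite ler_pM2r // nrm2_gt0.
have [eS _ hS] := sym_lmax pos sS.
have ge1 b : eigenvalue S b -> 1 <= b.
  move=> /eigenvalueP [v vS vn0]; have vp := nrm2_gt0 vn0.
  have := qf_eig vS; rewrite qS => h.
  have := qK (v *m Uh^T) => hk.
  rewrite -(ler_pM2r vp) mul1r -h lerDl //.
have Sup : lambda_max S <= 1 + C * lambda_max K.
  move: (eS) => /eigenvalueP [v vS vn0]; have vp := nrm2_gt0 vn0.
  have := qf_eig vS; rewrite qS => h.
  have h1 := hK (v *m Uh^T).
  have h2 := hG v; rewrite qG in h2.
  have h3 := ler_wpM2l Kge0 h2.
  have h4 := ler_wpM2r (nrm2_ge0 v) gC.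
  have h5 := ler_wpM2l Kge0 h4.
  rewrite -(ler_pM2r vp) -h.
  nra.
have lmin1 : 1 <= lambda_min S.
  by apply: lb_le_inf; [exists (lambda_max S) | move=> b /ge1].
have lminS : lambda_min S <= lambda_max S.
  by apply: ge_inf => //; exists 1 => b /ge1.
have lminp : 0 < lambda_min S by apply: (lt_le_trans ltr01 lmin1).
rewrite /cond_num; split.
  by rewrite ler_pdivlMr // mul1r.
rewrite ler_pdivrMr //; apply: le_trans Sup _.
rewrite -{1}(mulr1 (1 + C * lambda_max K)); apply: ler_wpM2l => //.
by rewrite addr_ge0 // mulr_ge0.
Qed.
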